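(* Let $(R,\mathfrak m,k)$ be a commutative noetherian local ring with $\mathfrak m^4=0$ and $H_R(-1)=0$. For $a,b\in\mathfrak m\smallsetminus\mathfrak m^2$ the following are equivalent: (1) $a,b$ form an exact pair of zero divisors; (2) $(0:_R a)=bR$; (3) $ab=0$, $a\mathfrak m^2=\mathfrak m^3=b\mathfrak m^2$, and $\mu(a\mathfrak m)=\mu(\mathfrak m)-1=\mu(b\mathfrak m)$.
   Context: For a local ring $(R,\mathfrak m,k)$, the Hilbert series is $H_R(t)=\sum_{n\ge0}\operatorname{rank}_k(\mathfrak m^n/\mathfrak m^{n+1})t^n$. $\mu(N)$ denotes the minimal number of generators of a finitely generated $R$-module $N$. Elements $a,b$ form an exact pair of zero divisors if $a,b$ are nonzero non-units with $(0:_R a)=bR$ and $(0:_R b)=aR$. *)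

(* Defs.v *)
From HB Require Import structures.
From mathcomp Require Import all_boot all_order all_algebra.
Set Implicit Arguments. Unset Strict Implicit. Unset Printing Implicit Defensive.
Import GRing.Theory.
Local Open Scope ring_scope.

Section LocalRingDefs.
Variable R : comUnitRingType.

Definition subset_eq (I J : R -> Prop) := forall x, I x <-> J x.

Definition is_ideal (I : R -> Prop) :=
  [/\ I 0, (forall x y, I x -> I y -> I (x + y)) & (forall r x, I x -> I (r * x))].

Definition lin_comb (s : seq R) (x : R) :=
  exists c : nat -> R, x = \sum_(i < size s) c i * s`_i.

Definition generates (s : seq R) (I : R -> Prop) := forall x, I x <-> lin_comb s x.

Definition noetherian := forall I, is_ideal I -> exists s, generates s I.

(* the set of non-units; in a local ring this is the maximal ideal m *)
Definition maxideal : R -> Prop := fun x => x \notin GRing.unit.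

Definition local_ring := forall x y, maxideal x -> maxideal y -> maxideal (x + y).

Definition ideal_mul (I J : R -> Prop) : R -> Prop := fun x =>
  exists s : seq (R * R), (forall p, p \in s -> I p.1 /\ J p.2) /\
                          x = \sum_(p <- s) p.1 * p.2.

Fixpoint mpow (n : nat) : R -> Prop :=
  match n with
  | 0 => fun _ => True
  | n'.+1 => ideal_mul (mpow n') maxideal
  end.

Definition scale (a : R) (I : R -> Prop) : R -> Prop := fun x => exists y, I y /\ x = a * y.

Definition ann (a : R) : R -> Prop := fun x => x * a = 0.

Definition principal (b : R) : R -> Prop := fun x => exists r, x = b * r.

Definition mu (I : R -> Prop) (n : nat) :=
  (exists s, size s = n /\ generates s I) /\ (forall s, generates s I -> (n <= size s)%N).

(* s lifts a k-basis of m^n / m^(n+1), k = R/m *)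
Definition gr_basis (n : nat) (s : seq R) :=
  [/\ (forall x, x \in s -> mpow n x),
      (forall c : nat -> R, mpow n.+1 (\sum_(i < size s) c i * s`_i) ->
          forall i, (i < size s)%N -> maxideal (c i)) &
      (forall y, mpow n y -> exists c : nat -> R,
          mpow n.+1 (y - \sum_(i < size s) c i * s`_i))].

Definition hilb_coeff (n t : nat) := exists s, size s = t /\ gr_basis n s.

(* H_R(-1) = 0, for R with m^N = 0 for some N (so H_R is a polynomial) *)
Definition hilbert_minus1_zero :=
  exists (N : nat) (e : nat -> nat),
    [/\ (forall n, hilb_coeff n (e n)),
        (forall n, (N <= n)%N -> e n = 0%N) &
        \sum_(n < N) (-1) ^+ n * (e n)%:R = 0 :> int].

Definition exact_pair (a b : R) :=
  [/\ a != 0, b != 0, a \notin GRing.unit, b \notin GRing.unit &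
      subset_eq (ann a) (principal b) /\ subset_eq (ann b) (principal a)].

End LocalRingDefs.

(* Main.v *)
Require Import Defs.
From HB Require Import structures.
From mathcomp Require Import all_boot all_order all_algebra.
From mathcomp Require Import zify ring.
From Stdlib Require Import ClassicalEpsilon.
Import GRing.Theory.
Local Open Scope ring_scope.

Module Part0.
Set Implicit Arguments. Unset Strict Implicit. Unset Printing Implicit Defensive.
Import GRing.Theory.
Local Open Scope ring_scope.

Section Ideals.
Variable R : comUnitRingType.
Hypothesis Hloc : local_ring R.

Lemma m0 : maxideal (0 : R).
Proof. by rewrite /maxideal unitr0. Qed.

Lemma mD (x y : R) : maxideal x -> maxideal y -> maxideal (x + y).
Proof. exact: Hloc. Qed.

Lemma mM (r x : R) : maxideal x -> maxideal (r * x).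
Proof. by rewrite /maxideal unitrM negb_and => ->; rewrite orbT. Qed.

Lemma mN (x : R) : maxideal x -> maxideal (- x).
Proof. by rewrite /maxideal unitrN. Qed.

Lemma m1 : ~ maxideal (1 : R).
Proof. by rewrite /maxideal unitr1. Qed.

Lemma im0 (I J : R -> Prop) : ideal_mul I J 0.
Proof. by exists [::]; split => //; rewrite big_nil. Qed.

Lemma imD (I J : R -> Prop) x y : ideal_mul I J x -> ideal_mul I J y -> ideal_mul I J (x + y).
Proof.
move=> [s [Hs ->]] [t [Ht ->]]; exists (s ++ t); split; last by rewrite big_cat.
by move=> p; rewrite mem_cat => /orP [/Hs|/Ht].
Qed.

Lemma im1 (I J : R -> Prop) x y : I x -> J y -> ideal_mul I J (x * y).
Proof. by move=> Hx Hy; exists [:: (x, y)]; split; [move=> p; rewrite inE => /eqP -> | rewrite big_seq1]. Qed.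

Lemma imM (I J : R -> Prop) r x : (forall r y, I y -> I (r * y)) -> ideal_mul I J x -> ideal_mul I J (r * x).
Proof.
move=> HI [s [Hs ->]]; exists [seq (r * p.1, p.2) | p <- s]; split.
  by move=> p /mapP [q /Hs [H1 H2] ->]; split => //=; apply: HI.
by rewrite big_map mulr_sumr; apply: eq_bigr => p _ /=; rewrite mulrA.
Qed.

Lemma im_mono (I I' J J' : R -> Prop) x : (forall y, I y -> I' y) -> (forall y, J y -> J' y) ->
  ideal_mul I J x -> ideal_mul I' J' x.
Proof. by move=> HI HJ [s [Hs ->]]; exists s; split => // p /Hs [/HI ? /HJ ?]. Qed.

Lemma mpow0 n : mpow n (0 : R).
Proof. by case: n => //= n; apply: im0. Qed.

Lemma mpowM n (r x : R) : mpow n x -> mpow n (r * x).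
Proof.
elim: n r x => // n IH r x /= H; apply: imM H; exact: IH.
Qed.

Lemma mpowMr n (r x : R) : mpow n x -> mpow n (x * r).
Proof. by rewrite mulrC; apply: mpowM. Qed.

Lemma mpowD n (x y : R) : mpow n x -> mpow n y -> mpow n (x + y).
Proof. by case: n => // n; apply: imD. Qed.

Lemma mpowN n (x : R) : mpow n x -> mpow n (- x).
Proof. by move=> H; rewrite -mulN1r; apply: mpowM. Qed.

Lemma mpowB n (x y : R) : mpow n x -> mpow n y -> mpow n (x - y).
Proof. by move=> Hx Hy; apply: mpowD => //; apply: mpowN. Qed.

Lemma mpow_sum n k (F : 'I_k -> R) : (forall i, mpow n (F i)) -> mpow n (\sum_(i < k) F i).
Proof. move=> H; apply: (big_ind (mpow n)) => //; [exact: mpow0 | exact: mpowD]. Qed.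

Lemma mpowS n (x : R) : mpow n.+1 x -> mpow n x.
Proof.
move=> [s [Hs ->]]; rewrite big_seq; apply: (big_ind (mpow n)); [exact: mpow0 | exact: mpowD |].
by move=> p Hp; case: (Hs p Hp) => H _; apply: mpowMr.
Qed.

Lemma mpow_le m n (x : R) : (m <= n)%N -> mpow n x -> mpow m x.
Proof.
move=> /subnK <-; elim: (n - m)%N x => // d IH x; rewrite addSn => /mpowS; exact: IH.
Qed.

Lemma mpow1E (x : R) : mpow 1 x <-> maxideal x.
Proof.
split.
  move=> [s [Hs ->]]; rewrite big_seq; apply: (big_ind (@maxideal R)); [exact: m0 | exact: mD |].
  by move=> p Hp; case: (Hs p Hp) => _ H; apply: mM.
by move=> H; rewrite -[x]mul1r; apply: im1.
Qed.

Lemma mpow_prod i j (x y : R) : mpow i x -> mpow j y -> mpow (i + j) (x * y).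
Proof.
elim: j y => [|j IH] y Hx; first by rewrite addn0 => _; apply: mpowMr.
move=> [s [Hs ->]]; rewrite addnS mulr_sumr big_seq.
apply: (big_ind (mpow (i + j).+1)); [exact: mpow0 | exact: mpowD |].
move=> p Hp; case: (Hs p Hp) => H1 H2; rewrite mulrA; apply: im1 => //; exact: IH.
Qed.

Lemma mpow_m n (x y : R) : mpow n x -> maxideal y -> mpow n.+1 (x * y).
Proof. by move=> H1 H2; apply: im1. Qed.

End Ideals.

End Part0.
Import Part0.
Unset Implicit Arguments. Set Strict Implicit.

Module Part1.
Set Implicit Arguments. Unset Strict Implicit. Unset Printing Implicit Defensive.
Import GRing.Theory.
Local Open Scope ring_scope.

Local Open Scope quotient_scope.

Section Main.
Variable R : comUnitRingType.
Hypothesis Hloc : local_ring R.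

Definition mpred : {pred R} := [pred x | x \notin GRing.unit].

Lemma mpred_closed : idealr_closed mpred.
Proof.
split; rewrite ?inE ?unitr0 ?unitr1 //.
move=> r u v; rewrite !inE => hu hv; apply: Hloc => //.
by rewrite /maxideal unitrM negb_and hu orbT.
Qed.

HB.instance Definition _ := isIdealr.Build R mpred mpred_closed.

Definition kk := {ideal_quot mpred}.
HB.instance Definition _ := GRing.ComNzRing.on kk.

Definition kinv (q : kk) : kk := \pi_kk (let x := repr q in if x \is a GRing.unit then x^-1 else 0).

Lemma pik0 x : (\pi_kk x == 0 :> kk) = (x \in mpred).
Proof. by rewrite -(rmorph0 (\pi_kk : R -> kk)) -Quotient.idealrBE subr0. Qed.

Lemma kmulVf (q : kk) : q != 0 -> kinv q * q = 1.
Proof.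
rewrite /kinv; set x := repr q.
have qE : q = \pi_kk x by rewrite /x reprK.
rewrite {1}qE pik0 inE negbK => Hu.
by rewrite Hu qE -rmorphM /= mulVr // rmorph1.
Qed.

Lemma kinv0 : kinv 0 = 0.
Proof.
rewrite /kinv; set x := repr (0 : kk).
have : \pi_kk x == 0 by rewrite /x reprK.
by rewrite pik0 inE => /negPf ->; rewrite rmorph0.
Qed.

HB.instance Definition _ := GRing.ComNzRing_isField.Build kk kmulVf kinv0.

Definition pi : R -> kk := \pi_kk.

Lemma pi0 x : pi x = 0 <-> maxideal x.
Proof. by split; [move/eqP; rewrite pik0 | move=> H; apply/eqP; rewrite pik0]. Qed.

Lemma pi_eq x y : pi x = pi y <-> maxideal (x - y).
Proof.
rewrite -pi0 /pi rmorphB /=; split; first by move->; rewrite subrr.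
by move/eqP; rewrite subr_eq0 => /eqP.
Qed.

Lemma piD x y : pi (x + y) = pi x + pi y. Proof. exact: rmorphD. Qed.
Lemma piM x y : pi (x * y) = pi x * pi y. Proof. exact: rmorphM. Qed.
Lemma piB x y : pi (x - y) = pi x - pi y. Proof. exact: rmorphB. Qed.
Lemma pi_0 : pi 0 = 0. Proof. exact: rmorph0. Qed.
Lemma piK q : pi (repr q) = q. Proof. exact: reprK. Qed.


Section Coord.
Variables (n : nat) (s : seq R).
Hypothesis Hs : gr_basis n s.

Definition cspec (y : R) (c : nat -> R) := mpow n.+1 (y - \sum_(i < size s) c i * s`_i).
Definition cf (y : R) : nat -> R := epsilon (inhabits (fun _ => 0)) (cspec y).
Definition crd (y : R) : 'rV[kk]_(size s) := \row_(i < size s) pi (cf y i).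

Lemma s_in (i : 'I_(size s)) : mpow n s`_i.
Proof. by case: Hs => H _ _; apply: H; apply: mem_nth. Qed.

Lemma cfP y : mpow n y -> cspec y (cf y).
Proof. move=> Hy; apply: epsilon_spec; case: Hs => _ _ H; exact: H. Qed.

Lemma cspec_uniq y c c' : cspec y c -> cspec y c' -> forall i : 'I_(size s), pi (c i) = pi (c' i).
Proof.
move=> H H' i; have := mpowB H' H.
have E : \sum_(i < size s) (c i - c' i) * s`_i = \sum_(i < size s) c i * s`_i - \sum_(i < size s) c' i * s`_i.
  by rewrite -sumrB; apply: eq_bigr => j _; rewrite mulrBl.
rewrite opprB addrC addrA addrNK -E.
case: Hs => _ Hi _ /(Hi (fun j => c j - c' j)) /(_ i (ltn_ord i)); by rewrite -pi_eq.
Qed.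

Lemma crd_spec y c : mpow n y -> cspec y c -> crd y = \row_i pi (c i).
Proof. by move=> Hy Hc; apply/rowP => i; rewrite !mxE; apply: cspec_uniq (cfP Hy) Hc i. Qed.

Lemma crdD x y : mpow n x -> mpow n y -> crd (x + y) = crd x + crd y.
Proof.
move=> Hx Hy; rewrite (@crd_spec _ (fun i => cf x i + cf y i)); first 1 last.
- exact: mpowD.
- rewrite /cspec.
  have E : \sum_(i < size s) (cf x i + cf y i) * s`_i = \sum_(i < size s) cf x i * s`_i + \sum_(i < size s) cf y i * s`_i.
    by rewrite -big_split; apply: eq_bigr => j _; rewrite mulrDl.
  by rewrite E opprD addrACA; apply: mpowD; apply: cfP.
by apply/rowP => i; rewrite !mxE piD.
Qed.

Lemma crdM r y : mpow n y -> crd (r * y) = pi r *: crd y.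
Proof.
move=> Hy; rewrite (@crd_spec _ (fun i => r * cf y i)); first 1 last.
- exact: mpowM.
- rewrite /cspec; have := mpowM r (cfP Hy); congr mpow.
  by rewrite mulrBr mulr_sumr; congr (_ - _); apply: eq_bigr => i _; rewrite mulrA.
by apply/rowP => i; rewrite !mxE piM.
Qed.

Lemma crdN y : mpow n y -> crd (- y) = - crd y.
Proof. by move=> Hy; rewrite -mulN1r crdM // /pi rmorphN1 scaleN1r. Qed.

Lemma crdB x y : mpow n x -> mpow n y -> crd (x - y) = crd x - crd y.
Proof. by move=> Hx Hy; rewrite crdD ?crdN //; apply: mpowN. Qed.

Lemma crd0 y : mpow n y -> (crd y = 0 <-> mpow n.+1 y).
Proof.
move=> Hy; split => [H|H].
  have -> : y = (y - \sum_(i < size s) cf y i * s`_i) + \sum_(i < size s) cf y i * s`_i by rewrite subrK.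
  apply: mpowD; first exact: cfP.
  apply: (big_ind (mpow n.+1)); [exact: mpow0 | exact: mpowD |] => i _.
  rewrite mulrC; apply: mpow_m; first exact: s_in.
  by apply/pi0; have := congr1 (fun v : 'rV[kk]_(size s) => v 0 i) H; rewrite !mxE.
rewrite (@crd_spec _ (fun _ => 0)) //; last first.
  by rewrite /cspec big1 ?subr0 // => i _; rewrite mul0r.
by apply/rowP => i; rewrite !mxE pi_0.
Qed.

Lemma crd_inj x y : mpow n x -> mpow n y -> crd x = crd y -> mpow n.+1 (x - y).
Proof. by move=> Hx Hy H; apply/crd0; [apply: mpowB | rewrite crdB // H subrr]. Qed.

Lemma crd_sum p (c : nat -> R) (y : 'I_p -> R) : (forall j, mpow n (y j)) ->
  crd (\sum_(j < p) c j * y j) = \sum_(j < p) pi (c j) *: crd (y j).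
Proof.
move=> Hy.
suff [] : mpow n (\sum_(j < p) c j * y j) /\ crd (\sum_(j < p) c j * y j) = \sum_(j < p) pi (c j) *: crd (y j) by [].
apply: (big_ind2 (fun x v => mpow n x /\ crd x = v)).
- split; [exact: mpow0 | by apply/crd0; [exact: mpow0 | exact: mpow0]].
- by move=> x1 v1 x2 v2 [H1 E1] [H2 E2]; split; [exact: mpowD | rewrite crdD // E1 E2].
- by move=> j _; split; [apply: mpowM | rewrite crdM].
Qed.

Definition liftc (v : 'rV[kk]_(size s)) (i : nat) : R :=
  if @insub _ _ 'I_(size s) i is Some j then repr (v 0 j) else 0.

Definition lift (v : 'rV[kk]_(size s)) : R := \sum_(i < size s) liftc v i * s`_i.

Lemma liftcE v (i : 'I_(size s)) : pi (liftc v i) = v 0 i.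
Proof. by rewrite /liftc valK piK. Qed.

Lemma lift_in v : mpow n (lift v).
Proof. apply: mpow_sum => i; apply: mpowM; exact: s_in. Qed.

Lemma crd_lift v : crd (lift v) = v.
Proof.
rewrite (@crd_spec _ (liftc v)).
- by apply/rowP => i; rewrite !mxE liftcE.
- exact: lift_in.
by rewrite /cspec /lift subrr; apply: mpow0.
Qed.

End Coord.


Lemma crd_comb n (s : seq R) (Hs : gr_basis n s) p (c : nat -> R) (y : 'I_p -> R) : (forall j, mpow n (y j)) ->
  crd n s (\sum_(j < p) c j * y j) = (\row_(j < p) pi (c j)) *m (\matrix_(j < p) crd n s (y j)).
Proof.
move=> Hy; rewrite (crd_sum Hs) // mulmx_sum_row; apply: eq_bigr => j _; by rewrite rowK mxE.
Qed.

Definition Mulm n (s s' : seq R) (r : R) : 'M[kk]_(size s, size s') := \matrix_(i < size s) crd n.+1 s' (r * s`_i).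

Lemma crd_mul n (s s' : seq R) (Hs : gr_basis n s) (Hs' : gr_basis n.+1 s') r y : maxideal r -> mpow n y ->
  crd n.+1 s' (r * y) = crd n s y *m Mulm n s s' r.
Proof.
move=> Hr Hy.
have Hr1 : mpow 1 r by apply/mpow1E.
have E : r * y = \sum_(i < size s) cf n s y i * (r * s`_i) + r * (y - \sum_(i < size s) cf n s y i * s`_i).
  by rewrite mulrBr mulr_sumr; under [X in _ = _ + (_ - X)]eq_bigr do rewrite mulrCA; rewrite addrC subrK.
have Hz : mpow n.+2 (r * (y - \sum_(i < size s) cf n s y i * s`_i)).
  by rewrite -add1n; apply: mpow_prod => //; apply: cfP.
have Hrs : forall i : 'I_(size s), mpow n.+1 (r * s`_i).
  by move=> i; rewrite mulrC; apply: mpow_m => //; apply: s_in.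
rewrite E (crdD Hs'); first last.
- exact: mpowS.
- by apply: mpow_sum => i; apply: mpowM.
rewrite (proj2 (crd0 Hs' (mpowS Hz)) Hz) addr0 (crd_comb Hs') //.
Qed.

Lemma dim_le n (s s' : seq R) : gr_basis n s -> gr_basis n s' -> (size s <= size s')%N.
Proof.
move=> Hs Hs'.
pose M := \matrix_(j < size s) crd n s' (s`_j).
have indep : forall w : 'rV_(size s), w *m M = 0 -> w = 0.
  move=> w Hw.
  have : crd n s' (lift w) = 0.
    rewrite /lift (crd_comb Hs'); last exact: s_in.
    by rewrite -Hw; congr (_ *m _); apply/rowP => j; rewrite !mxE liftcE.
  move/(crd0 Hs' (lift_in Hs w)); case: Hs => _ Hi _ /Hi Hc.
  apply/rowP => j; rewrite mxE -liftcE; apply/pi0; exact: Hc.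
have K0 : kermx M = 0.
  apply/row_matrixP => i; rewrite row0; apply: indep.
  by rewrite -row_mul mulmx_ker row0.
have := mxrank_ker M; rewrite K0 mxrank0 => /esym /eqP; rewrite subn_eq0 => H.
exact: leq_trans H (rank_leq_col M).
Qed.

Lemma dim_uniq n (s s' : seq R) : gr_basis n s -> gr_basis n s' -> size s = size s'.
Proof. by move=> H H'; apply/eqP; rewrite eqn_leq (dim_le H H') (dim_le H' H). Qed.

End Main.

End Part1.
Import Part1.
Unset Implicit Arguments. Set Strict Implicit.

Module Part2.
Set Implicit Arguments. Unset Strict Implicit. Unset Printing Implicit Defensive.
Import GRing.Theory.
Local Open Scope ring_scope.

Section LinAlg.
Variable F : fieldType.

Lemma line_ker p q (A : 'M[F]_(p,q)) (v : 'rV_p) : v != 0 -> v *m A = 0 ->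
  (forall w : 'rV_p, w *m A = 0 -> exists l, w = l *: v) -> \rank A = (p - 1)%N.
Proof.
move=> v0 vA H.
have s1 : (v <= kermx A)%MS by apply/sub_kermxP.
have s2 : (kermx A <= v)%MS.
  apply/row_subP => i; have [|l ->] := H (row i (kermx A)); last by rewrite scalemx_sub.
  by rewrite -row_mul mulmx_ker row0.
have := mxrank_ker A; have := mxrankS s1; have := mxrankS s2; rewrite rank_rV v0 => h1 h2.
have := rank_leq_row A; lia.
Qed.

Lemma rank_line p q (A : 'M[F]_(p,q)) (v : 'rV_p) : v != 0 -> v *m A = 0 -> \rank A = (p - 1)%N ->
  forall w : 'rV_p, w *m A = 0 -> exists l, w = l *: v.
Proof.
move=> v0 vA rA w wA.
have s1 : (v <= kermx A)%MS by apply/sub_kermxP.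
have e : (v == kermx A)%MS.
  rewrite -(mxrank_leqif_eq s1).2; have := mxrankS s1; rewrite mxrank_ker rank_rV v0 rA.
  by move=> h; apply/eqP; lia.
case/andP: e => _ e.
have : (w <= v)%MS by apply: submx_trans e; apply/sub_kermxP.
case/submxP => D ->; exists (D 0 0); by rewrite {1}(mx11_scalar D) mul_scalar_mx.
Qed.

End LinAlg.

End Part2.
Import Part2.
Unset Implicit Arguments. Set Strict Implicit.

Module Part3.
Set Implicit Arguments. Unset Strict Implicit. Unset Printing Implicit Defensive.
Import GRing.Theory.
Local Open Scope ring_scope.

Section Nak.
Variable R : comUnitRingType.
Hypothesis Hloc : local_ring R.
Hypothesis Hm4 : forall x : R, mpow 4 x -> x = 0.

Local Notation crd := (crd Hloc).
Local Notation k := (kk Hloc).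
Local Notation pi := (pi Hloc).

Lemma mpow_zero n (x : R) : (4 <= n)%N -> mpow n x -> x = 0.
Proof. by move=> Hn Hx; apply: Hm4; apply: mpow_le Hx. Qed.

Lemma lc0 (g : seq R) : lin_comb g 0.
Proof. by exists (fun _ => 0); rewrite big1 // => i _; rewrite mul0r. Qed.

Lemma lcD (g : seq R) x y : lin_comb g x -> lin_comb g y -> lin_comb g (x + y).
Proof.
move=> [c ->] [d ->]; exists (fun i => c i + d i).
by rewrite -big_split; apply: eq_bigr => i _; rewrite mulrDl.
Qed.

Lemma lcM (g : seq R) r x : lin_comb g x -> lin_comb g (r * x).
Proof.
move=> [c ->]; exists (fun i => r * c i).
by rewrite mulr_sumr; apply: eq_bigr => i _; rewrite mulrA.
Qed.

Lemma lc_gen (g : seq R) i : (i < size g)%N -> lin_comb g g`_i.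
Proof.
move=> Hi; exists (fun j => (j == i)%:R).
rewrite (bigD1 (Ordinal Hi)) //= eqxx mul1r big1 ?addr0 // => j.
by rewrite -val_eqE /= => /negPf ->; rewrite mul0r.
Qed.

Lemma gen_in (I : R -> Prop) (HI : is_ideal I) (g : seq R) :
  (forall i, (i < size g)%N -> I g`_i) -> forall x, lin_comb g x -> I x.
Proof.
case: HI => I0 ID IM Hg x [c ->]; apply: (big_ind I) => // i _.
by apply: IM; apply: Hg.
Qed.

Lemma nakayama (I S : R -> Prop) (HI : is_ideal I) (S0 : S 0)
  (SD : forall x y, S x -> S y -> S (x + y)) (SM : forall r x, S x -> S (r * x))
  (H : forall x, I x -> exists z, S z /\ ideal_mul I (@maxideal R) (x - z)) :
  forall x, I x -> S x.
Proof.
pose W j := ideal_mul (mpow j) I.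
have step : forall j w, W j w -> exists z, S z /\ W j.+1 (w - z).
  move=> j w [l [Hl ->]]; elim: l Hl => [|[p q] l IH] Hl.
    by exists 0; split => //; rewrite big_nil subrr; apply: im0.
  have [z' [Sz' Wz']] : exists z, S z /\ W j.+1 (\sum_(pr <- l) pr.1 * pr.2 - z).
    by apply: IH => pr Hpr; apply: Hl; rewrite in_cons Hpr orbT.
  have [/= Hp Hq] := Hl (p, q) (mem_head _ _).
  have [zq [Szq [lq [Hlq Eq]]]] := H q Hq.
  exists (p * zq + z'); split; first by apply: SD => //; apply: SM.
  rewrite big_cons /=.
  have -> : p * q + \sum_(pr <- l) pr.1 * pr.2 - (p * zq + z') =
            p * (q - zq) + (\sum_(pr <- l) pr.1 * pr.2 - z') by ring.
  apply: imD => //; rewrite Eq.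
  exists [seq (p * pr.2, pr.1) | pr <- lq]; split.
    by move=> pr /mapP [pr' /Hlq [H1 H2] ->] /=; split => //; apply: im1.
  by rewrite big_map mulr_sumr; apply: eq_bigr => pr _ /=; ring.
have iter : forall x, I x -> forall j, exists z, S z /\ W j (x - z).
  move=> x Ix; elim => [|j [z [Sz Wz]]].
    by exists 0; split => //; rewrite subr0 -[x]mul1r; apply: im1.
  have [z'' [Sz'' W'']] := step _ _ Wz.
  by exists (z + z''); split; [apply: SD | rewrite opprD addrA].
move=> x Ix; have [z [Sz [l [Hl E]]]] := iter x Ix 4.
suff : x - z = 0 by move/eqP; rewrite subr_eq0 => /eqP ->.
rewrite E big_seq big1 // => pr Hpr; have [H1 _] := Hl pr Hpr.
by rewrite (Hm4 H1) mul0r.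
Qed.


Lemma mu_rank j (s : seq R) (Hs : gr_basis j s) (I : R -> Prop) (HI : is_ideal I) p
  (M : 'M[k]_(p, size s))
  (Hsub : forall y, I y -> mpow j y)
  (Hcrd : forall y, I y -> (crd j s y <= M)%MS)
  (Hlift : forall v, (v <= M)%MS -> exists y, I y /\ crd j s y = v)
  (Hnak : forall y, I y -> mpow j.+1 y -> ideal_mul I (@maxideal R) y) : mu I (\rank M).
Proof.
have HI' := HI; case: HI' => I0 ID IM.
split.
  pose B := row_base M; pose r := \rank M.
  have HB : forall l, (row l B <= M)%MS.
    by move=> l; have := row_sub l B; rewrite /B eq_row_base.
  pose gf (i : nat) : R := if @insub _ _ 'I_r i is Some l then
     epsilon (inhabits 0) (fun y => I y /\ crd j s y = row l B) else 0.
  have gfP : forall l : 'I_r, I (gf l) /\ crd j s (gf l) = row l B.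
    move=> l; rewrite /gf valK /=; apply: (epsilon_spec (inhabits 0) (fun y => I y /\ crd j s y = row l B)); exact: Hlift.
  pose g := mkseq gf r.
  have Eg : size g = r by rewrite size_mkseq.
  have gE : forall l : 'I_r, g`_l = gf l by move=> l; rewrite nth_mkseq.
  have gI : forall i, (i < size g)%N -> I g`_i.
    by move=> i; rewrite Eg => Hi; rewrite (gE (Ordinal Hi)); case: (gfP (Ordinal Hi)).
  exists g; split => // x; split; last exact: gen_in.
  apply: nakayama => //; [exact: lc0 | exact: lcD | exact: lcM |].
  move=> y Iy.
  have : (crd j s y <= B)%MS by rewrite eq_row_base; apply: Hcrd.
  case/submxP => u Eu.
  pose c (i : nat) : R := if @insub _ _ 'I_r i is Some l then repr (u 0 l) else 0.
  pose z := \sum_(i < r) c i * g`_i.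
  have Iz : I z by apply: (big_ind I) => // i _; apply: IM; apply: gI; rewrite Eg.
  exists z; split.
    by exists c; rewrite /z Eg.
  apply: Hnak; first by apply: ID => //; rewrite -mulN1r; apply: IM.
  apply: (crd_inj Hs (Hsub _ Iy) (Hsub _ Iz)).
  rewrite Eu /z (crd_comb Hloc Hs); last by move=> i; apply: Hsub; apply: gI; rewrite Eg.
  congr (_ *m _).
    by apply/rowP => i; rewrite !mxE /c valK piK.
  by apply/row_matrixP => i; rewrite rowK gE; case: (gfP i).
move=> t Ht.
pose T := \matrix_(i < size t) crd j s t`_i.
have tI : forall i, (i < size t)%N -> I t`_i by move=> i Hi; apply/Ht; apply: lc_gen.
have MT : (M <= T)%MS.
  apply/row_subP => l; have [y [Iy Ey]] := Hlift _ (row_sub l M).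
  have [c Ec] := proj1 (Ht y) Iy.
  rewrite -Ey Ec (crd_comb Hloc Hs); first exact: submxMl.
  by move=> i; apply: Hsub; apply: tI.
by apply: leq_trans (mxrankS MT) (rank_leq_row T).
Qed.

End Nak.

End Part3.
Import Part3.
Unset Implicit Arguments. Set Strict Implicit.

Module Part4.
Set Implicit Arguments. Unset Strict Implicit. Unset Printing Implicit Defensive.
Import GRing.Theory.
Local Open Scope ring_scope.

Section Core.
Variable R : comUnitRingType.
Hypothesis Hloc : local_ring R.
Hypothesis Hm4 : forall x : R, mpow 4 x -> x = 0.
Variables s1 s2 s3 : seq R.
Hypothesis H1 : gr_basis 1 s1.
Hypothesis H2 : gr_basis 2 s2.
Hypothesis H3 : gr_basis 3 s3.
Hypothesis Hdim : (size s2 + 1 = size s1 + size s3)%N.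

Local Notation c1 := (crd Hloc 1 s1).
Local Notation c2 := (crd Hloc 2 s2).
Local Notation c3 := (crd Hloc 3 s3).
Local Notation M1 := (Mulm Hloc 1 s1 s2).
Local Notation M2 := (Mulm Hloc 2 s2 s3).

Lemma mpow_m1 n (x : R) : mpow n.+1 x -> maxideal x.
Proof. by move=> H; apply/(mpow1E Hloc); apply: (mpow_le _ H). Qed.

Lemma mul1 r y : maxideal r -> maxideal y -> c2 (r * y) = c1 y *m M1 r.
Proof. by move=> Hr Hy; apply: crd_mul => //; apply/(mpow1E Hloc). Qed.

Lemma mul2 r y : maxideal r -> mpow 2 y -> c3 (r * y) = c2 y *m M2 r.
Proof. by move=> Hr Hy; apply: crd_mul. Qed.

Lemma crd_zero n (s : seq R) (Hs : gr_basis n s) : crd Hloc n s 0 = 0.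
Proof. by apply/(crd0 Hloc Hs); apply: mpow0. Qed.

Lemma nz1 b : maxideal b -> ~ mpow 2 b -> c1 b != 0.
Proof. by move=> Hb Hb2; apply/eqP => /(crd0 Hloc H1 (proj2 (mpow1E Hloc _) Hb)). Qed.

Lemma mu_m : mu (@maxideal R) (size s1).
Proof.
rewrite -(mxrank1 (kk Hloc) (size s1)).
apply: (mu_rank Hm4 H1).
- by split; [exact: m0 | exact: Hloc | exact: mM].
- by move=> y /(mpow1E Hloc).
- by move=> y _; apply: submx1.
- move=> v _; exists (lift v); split; last exact: crd_lift.
  by apply/(mpow1E Hloc); apply: lift_in.
- by move=> y _ H; apply: im_mono H => // z /(mpow1E Hloc).
Qed.

Lemma mu_scale r : maxideal r -> (forall z, mpow 3 z -> scale r (mpow 2) z) ->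
  mu (scale r (@maxideal R)) (\rank (M1 r)).
Proof.
move=> Hr Hs3; apply: (mu_rank Hm4 H2).
- split; first by exists 0; split; [exact: m0 | rewrite mulr0].
  + by move=> x y [x' [Hx ->]] [y' [Hy ->]]; exists (x' + y'); split; [exact: Hloc | rewrite mulrDr].
  + by move=> t x [x' [Hx ->]]; exists (t * x'); split; [exact: mM | rewrite mulrCA].
- by move=> y [x [Hx ->]]; apply: (@mpow_prod _ 1 1); apply/(mpow1E Hloc).
- by move=> y [x [Hx ->]]; rewrite mul1 //; apply: submxMl.
- move=> v /submxP [u ->]; exists (r * lift u); split.
    by exists (lift u); split => //; apply/(mpow1E Hloc); apply: lift_in.
  by rewrite mul1 ?crd_lift //; apply/(mpow1E Hloc); apply: lift_in.
- move=> y _ /Hs3 [w [[l [Hl ->]] ->]].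
  exists [seq (r * pr.1, pr.2) | pr <- l]; split.
    by move=> pr /mapP [pr' /Hl [Ha Hb] ->] /=; split => //; exists pr'.1; split => //; apply/(mpow1E Hloc).
  by rewrite big_map mulr_sumr; apply: eq_bigr => pr _ /=; rewrite mulrA.
Qed.


Lemma lift1 v : maxideal (lift (s:=s1) (Hloc:=Hloc) v).
Proof. by apply/(mpow1E Hloc); apply: lift_in. Qed.

Lemma unit_m2 b t (y : R) n : ~ mpow n b -> b * t = y -> mpow n y -> maxideal t.
Proof.
move=> Hb Ey Hy; apply/negP => Ht; apply: Hb.
by rewrite -(mulrK Ht b) Ey; apply: mpowMr.
Qed.

Lemma two_three a b : maxideal a -> ~ mpow 2 a -> maxideal b -> ~ mpow 2 b ->
  (forall x, x * a = 0 <-> exists t, x = b * t) ->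
  [/\ a * b = 0, forall z, mpow 3 z -> scale a (mpow 2) z,
      forall z, mpow 3 z -> scale b (mpow 2) z,
      \rank (M1 a) = (size s1 - 1)%N & \rank (M1 b) = (size s1 - 1)%N].
Proof.
move=> Ham Ham2 Hbm Hbm2 Hann.
have ab0 : a * b = 0 by rewrite mulrC; apply/Hann; exists 1; rewrite mulr1.
have ca := nz1 Ham Ham2; have cb := nz1 Hbm Hbm2.
have Ha1 : mpow 1 a by apply/(mpow1E Hloc).
have Hb1 : mpow 1 b by apply/(mpow1E Hloc).
have kA2 : (kermx (M2 a) <= M1 b)%MS.
  apply/row_subP => i; set w := row i (kermx (M2 a)).
  have wA : w *m M2 a = 0 by rewrite /w -row_mul mulmx_ker row0.
  pose y := lift (s:=s2) (Hloc:=Hloc) w.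
  have Hy : mpow 2 y := lift_in H2 w.
  have : c3 (a * y) = 0 by rewrite mul2 // crd_lift.
  move/(crd0 Hloc H3 (@mpow_prod _ 1 2 _ _ Ha1 Hy)) => Hay.
  have ya0 : y * a = 0 by rewrite mulrC; apply: Hm4.
  have [t Et] := proj1 (Hann y) ya0.
  have Ht := unit_m2 Hbm2 (esym Et) Hy.
  by rewrite -(crd_lift H2 w) -/y Et mul1 //; apply: submxMl.
have kB1 : c1 a *m M1 b = 0 by rewrite -mul1 // mulrC ab0 crd_zero.
have r1 : (1 <= \rank (kermx (M1 b)))%N.
  have sk : (c1 a <= kermx (M1 b))%MS by apply/sub_kermxP.
  by have := mxrankS sk; rewrite rank_rV ca.
have r2 := mxrank_ker (M1 b); have r3 := mxrank_ker (M2 a).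
have r4 := mxrankS kA2; have r5 := rank_leq_col (M2 a); have r6 := rank_leq_row (M2 a).
have rA2 : \rank (M2 a) = size s3 by lia.
have rB1 : \rank (M1 b) = (size s1 - 1)%N by lia.
have Sa : forall z, mpow 3 z -> scale a (mpow 2) z.
  move=> z Hz.
  have : (c3 z <= M2 a)%MS by apply: submx_full; rewrite /row_full rA2.
  case/submxP => u Eu; exists (lift u); split; first exact: lift_in.
  apply/eqP; rewrite -subr_eq0; apply/eqP; apply: Hm4.
  apply: (crd_inj H3 Hz); first by apply: (@mpow_prod _ 1 2) => //; apply: lift_in.
  by rewrite mul2 // ?crd_lift //; apply: lift_in.
have lineB := rank_line ca kB1 rB1.
have Sb : forall z, mpow 3 z -> scale b (mpow 2) z.
  move=> z Hz.
  have za0 : z * a = 0 by apply: Hm4; apply: (@mpow_prod _ 3 1).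
  have [t Et] := proj1 (Hann z) za0.
  have Ht := unit_m2 (fun H => Hbm2 (mpow_le (isT : (2 <= 3)%N) H)) (esym Et) Hz.
  have : c1 t *m M1 b = 0.
    by rewrite -mul1 // -Et; apply/(crd0 Hloc H2 (mpowS Hz)).
  case/lineB => l El.
  have Ht1 : mpow 1 t by apply/(mpow1E Hloc).
  have E2 : mpow 2 (t - repr l * a).
    by apply: (crd_inj H1 Ht1); [apply: mpowM | rewrite crdM // piK].
  exists (t - repr l * a); split => //.
  by rewrite Et mulrBr mulrCA (mulrC b a) ab0 mulr0 subr0.
split => //.
apply: (line_ker cb); first by rewrite -mul1 // ab0 crd_zero.
move=> w wA.
pose x := lift (s:=s1) (Hloc:=Hloc) w.
have Hx : mpow 1 x := lift_in H1 w.
have : c2 (a * x) = 0 by rewrite mul1 ?crd_lift //; apply/(mpow1E Hloc).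
move/(crd0 Hloc H2 (@mpow_prod _ 1 1 _ _ Ha1 Hx)) => /Sa [y [Hy Ey]].
have xya0 : (x - y) * a = 0 by rewrite mulrBl mulrC Ey mulrC subrr.
have [t Et] := proj1 (Hann (x - y)) xya0.
exists (pi Hloc t).
have Hy1 : mpow 1 y := mpowS Hy.
rewrite -(crd_lift H1 w) -/x -[x](subrK y) crdD //; last exact: mpowB.
rewrite (proj2 (crd0 Hloc H1 Hy1) Hy) addr0 Et mulrC crdM //.
Qed.

Lemma three_ann a b : maxideal a -> ~ mpow 2 a -> maxideal b -> ~ mpow 2 b ->
  a * b = 0 -> (forall z, mpow 3 z -> scale a (mpow 2) z) ->
  (forall z, mpow 3 z -> scale b (mpow 2) z) ->
  \rank (M1 a) = (size s1 - 1)%N -> \rank (M1 b) = (size s1 - 1)%N ->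
  forall x, x * a = 0 -> exists t, x = b * t.
Proof.
move=> Ham Ham2 Hbm Hbm2 ab0 Sa Sb ra rb x xa0.
have ca := nz1 Ham Ham2; have cb := nz1 Hbm Hbm2.
have Ha1 : mpow 1 a by apply/(mpow1E Hloc).
have Hb1 : mpow 1 b by apply/(mpow1E Hloc).
have kA1 : c1 b *m M1 a = 0 by rewrite -mul1 // ab0 crd_zero.
have lineA := rank_line cb kA1 ra.
have rA2 : (size s3 <= \rank (M2 a))%N.
  have S : ((1%:M : 'M[kk Hloc]_(size s3)) <= M2 a)%MS.
    apply/row_subP => i.
    have [y [Hy Ey]] := Sa _ (lift_in H3 (row i 1%:M)).
    by rewrite -(crd_lift H3 (row i 1%:M)) Ey mul2 //; apply: submxMl.
  by have := mxrankS S; rewrite mxrank1.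
have r3 := mxrank_ker (M2 a); have r5 := rank_leq_col (M2 a).
have BK : (M1 b <= kermx (M2 a))%MS.
  apply/sub_kermxP; apply/row_matrixP => i; rewrite row0 row_mul rowK.
  have Hbs : mpow 2 (b * s1`_i) by apply: (@mpow_prod _ 1 1) => //; apply: s_in.
  by rewrite -mul2 // mulrA ab0 mul0r crd_zero.
have BK' : (kermx (M2 a) <= M1 b)%MS.
  have := (mxrank_leqif_eq BK).2; rewrite rb mxrank_ker.
  have -> : (size s1 - 1 == size s2 - \rank (M2 a))%N by apply/eqP; lia.
  by move/esym/andP => [].
have Hx : maxideal x.
  apply/negP => Hu; apply: Ham2; rewrite -(mulKr Hu a) mulrC xa0 mul0r; apply: mpow0.
have Hx1 : mpow 1 x by apply/(mpow1E Hloc).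
have : c1 x *m M1 a = 0 by rewrite -mul1 // mulrC xa0 crd_zero.
case/lineA => l El.
pose y := x - repr l * b.
have Hy : mpow 2 y by apply: (crd_inj H1 Hx1); [apply: mpowM | rewrite crdM // piK].
have ay0 : a * y = 0 by rewrite /y mulrBr mulrCA ab0 mulr0 mulrC xa0 subr0.
have : (c2 y <= M1 b)%MS.
  by apply: submx_trans BK'; apply/sub_kermxP; rewrite -mul2 // ay0 crd_zero.
case/submxP => u Eu.
pose x' := lift (s:=s1) (Hloc:=Hloc) u.
have Hx' : mpow 1 x' := lift_in H1 u.
have Hbx : mpow 2 (b * x') by apply: (@mpow_prod _ 1 1).
have : mpow 3 (y - b * x').
  by apply: (crd_inj H2 Hy Hbx); rewrite mul1 ?crd_lift //; apply/(mpow1E Hloc).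
case/Sb => w [_ Ew].
exists (repr l + x' + w); rewrite !mulrDr -Ew /y; ring.
Qed.

End Core.

End Part4.
Import Part4.
Unset Implicit Arguments. Set Strict Implicit.

Lemma mu_uniq (R : comUnitRingType) (I : R -> Prop) n n' : mu I n -> mu I n' -> n = n'.
Proof.
move=> [[s [Es Hs]] Hn] [[s' [Es' Hs']] Hn'].
by apply/eqP; rewrite eqn_leq; apply/andP; split; [rewrite -Es'; exact: Hn | rewrite -Es; exact: Hn'].
Qed.

Arguments mu_uniq {R I n n'}.

Lemma sum_trunc (f : nat -> int) N K : (forall n, (N <= n)%N -> f n = 0) ->
  \sum_(n < N + K) f n = \sum_(n < N) f n.
Proof.
move=> H; elim: K => [|K IH]; first by rewrite addn0.
by rewrite addnS big_ord_recr /= IH H ?leq_addr // addr0.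
Qed.

Theorem proposition2p3 (R : comUnitRingType) (a b : R)
  (Hnoeth : noetherian R) (Hloc : local_ring R)
  (Hm4 : forall x : R, mpow 4 x -> x = 0)
  (HH : hilbert_minus1_zero R)
  (Ham : maxideal a) (Ham2 : ~ mpow 2 a)
  (Hbm : maxideal b) (Hbm2 : ~ mpow 2 b) :
  [<-> exact_pair a b;
       subset_eq (ann a) (principal b);
       [/\ a * b = 0,
           subset_eq (scale a (mpow 2)) (mpow 3),
           subset_eq (mpow 3) (scale b (mpow 2)) &
           exists n : nat, [/\ mu (@maxideal R) n,
                              mu (scale a (@maxideal R)) (n - 1)%N &
                              mu (scale b (@maxideal R)) (n - 1)%N]]].
Proof.
have [N [e [Hc He Hs]]] := HH.
have [s0 [E0 B0]] := Hc 0%N.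
have [s1 [E1 B1]] := Hc 1%N.
have [s2 [E2 B2]] := Hc 2%N.
have [s3 [E3 B3]] := Hc 3%N.
have e0 : e 0%N = 1%N.
  rewrite -E0 (dim_uniq Hloc B0 (s' := [:: 1])) //; split.
  - by [].
  - move=> c; rewrite big_ord1 /= mulr1 => /(mpow1E Hloc) H i; rewrite ltnS leqn0 => /eqP ->; exact: H.
  - move=> y _; exists (fun _ => y); by rewrite big_ord1 /= mulr1 subrr; apply: im0.
have ez : forall n, (4 <= n)%N -> e n = 0%N.
  move=> n Hn; have [s [Es Bs]] := Hc n.
  rewrite -Es (dim_uniq Hloc Bs (s' := [::])) //; split => //.
  by move=> y Hy; exists (fun _ => 0); rewrite (mpow_zero Hm4 Hn Hy) big_ord0 subrr; apply: mpow0.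
have Hdim : (size s2 + 1 = size s1 + size s3)%N.
  pose f (n : nat) : int := (-1) ^+ n * (e n)%:R.
  have : \sum_(n < 4) f n = 0.
    rewrite -(@sum_trunc f 4 N); last by move=> n /ez; rewrite /f => ->; rewrite mulr0.
    rewrite addnC sum_trunc; first exact: Hs.
    by move=> n /He; rewrite /f => ->; rewrite mulr0.
  rewrite !big_ord_recr big_ord0 /= /f e0 E1 E2 E3.
  rewrite !exprS expr0 /=; lia.
tfae=> [[_ _ _ _ [Ha _]] // | Ha | [ab0 Sa Sb [n [mn ma mb]]]].
- have Hann : forall x, x * a = 0 <-> exists t, x = b * t by move=> x; exact: Ha x.
  have [ab0 Sa Sb ra rb] := two_three Hloc Hm4 B1 B2 B3 Hdim Ham Ham2 Hbm Hbm2 Hann.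
  split => //.
  + move=> x; split; last exact: Sa.
    by move=> [y [Hy ->]]; apply: (@mpow_prod _ 1 2) => //; apply/(mpow1E Hloc).
  + move=> x; split; first exact: Sb.
    by move=> [y [Hy ->]]; apply: (@mpow_prod _ 1 2) => //; apply/(mpow1E Hloc).
  + exists (size s1); split; first exact: mu_m.
    * rewrite -ra; apply: mu_scale => //; exact: Sa.
    * rewrite -rb; apply: mu_scale => //; exact: Sb.
have en : n = size s1 by apply: mu_uniq mn (mu_m Hloc Hm4 B1).
have Sa' : forall z, mpow 3 z -> scale a (mpow 2) z by move=> z /(Sa z).
have Sb' : forall z, mpow 3 z -> scale b (mpow 2) z by move=> z /(Sb z).
have ra : \rank (Mulm Hloc 1 s1 s2 a) = (size s1 - 1)%N.
  by rewrite (mu_uniq (mu_scale Hloc Hm4 B1 B2 Ham Sa') ma) en.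
have rb : \rank (Mulm Hloc 1 s1 s2 b) = (size s1 - 1)%N.
  by rewrite (mu_uniq (mu_scale Hloc Hm4 B1 B2 Hbm Sb') mb) en.
have ba0 : b * a = 0 by rewrite mulrC.
have a0 : a != 0 by apply/eqP => a0; apply: Ham2; rewrite a0; apply: mpow0.
have b0 : b != 0 by apply/eqP => b0; apply: Hbm2; rewrite b0; apply: mpow0.
split => //; split => x; split.
- exact: (three_ann B1 B2 B3 Hdim Ham Ham2 Hbm Hbm2 ab0 Sa' Sb' ra rb).
- by move=> [t ->]; rewrite /ann mulrAC ba0 mul0r.
- exact: (three_ann B1 B2 B3 Hdim Hbm Hbm2 Ham Ham2 ba0 Sb' Sa' rb ra).
- by move=> [t ->]; rewrite /ann mulrAC ab0 mul0r.
Qed.
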